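(* Fix a set of mean-field flows $\mathcal{S}=\{\mu^1,\dots,\mu^K\}$ and let $\pi^a,\pi^b\in\mathcal{B}^{\mathrm{RQE}}_{\mathrm{opt}}(\mathcal{S})$. Suppose there is $t\in\{0,\dots,T-1\}$ such that $Q^{\pi^a}_{\mu^k,t}(x,u)=Q^{\pi^b}_{\mu^k,t}(x,u)$ for all $x\in\mathcal{X}$, $u\in\mathcal{U}$, $k\in\{1,\dots,K\}$. Then (i) $\pi^a_t(\cdot\mid x)=\pi^b_t(\cdot\mid x)$ for all $x\in\mathcal{X}$, and (ii) if $t\ge1$, $Q^{\pi^a}_{\mu^k,t-1}(x,u)=Q^{\pi^b}_{\mu^k,t-1}(x,u)$ for all $x,u,k$.
   Context: Let $\mathcal{X},\mathcal{U}$ be finite nonempty sets and $T\ge1$. $\mathcal{P}(E)$ denotes probability vectors on a finite set $E$. For $t\in\{0,\dots,T-1\}$: transition kernels $f_t(x'\mid x,u,\mu)$ (a distribution over $x'$ for each $x,u$ and $\mu\in\mathcal{P}(\mathcal{X})$) and bounded rewards $r_t(x,u,\mu)$. A policy is $\pi=(\pi_0,\dots,\pi_{T-1})$ with $\pi_t(\cdot\mid x)\in\mathcal{P}(\mathcal{U})$; $\Pi_t$ the set of time-$t$ decision rules. A mean-field flow is a sequence $\mu=(\mu_0,\dots,\mu_T)$ in $\mathcal{P}(\mathcal{X})$. Q-functions: $Q^\pi_{\mu,T-1}(x,u)=r_{T-1}(x,u,\mu_{T-1})$, $Q^\pi_{\mu,t}(x,u)=r_t(x,u,\mu_t)+\sum_{x'}f_t(x'\mid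 x,u,\mu_t)V^\pi_{\mu,t+1}(x')$ for $t<T-1$, with $V^\pi_{\mu,t}(x)=\sum_u\pi_t(u\mid x)Q^\pi_{\mu,t}(x,u)$. Data: finite $\mathbb{M}=\{\mu_0^1,\dots,\mu_0^K\}\subset\mathcal{P}(\mathcal{X})$ with probabilities $w_k=\Gamma^*(\mu_0^k)$; $\tau>0$; $\alpha>0$; a strictly convex regularizer $\nu:\mathcal{P}(\mathcal{U})\to\mathbb{R}$. A set of flows $\mathcal{S}=\{\mu^1,\dots,\mu^K\}$ has $\mu^k$ starting at $\mu_0^k$. Cost: $c_t^{\pi,\alpha}(x;\mathcal{S})=\frac1\tau\log\big(\sum_kw_k\exp(-\tau\sum_u\pi_t(u\mid x)Q^\pi_{\mu^k,t}(x,u))\big)+\alpha\nu(\pi_t(\cdot\mid x))$. $(\pi'_t,\pi_{-t})$ denotes $\pi$ with time-$t$ component replaced by $\pi'_t\in\Pi_t$. $\mathcal{B}^{\mathrm{RQE}}_{\mathrm{opt}}(\mathcal{S})$ is the set of policies $\pi$ such that for all $t,x$, $\pi_t(\cdot\mid x)$ minimizes $c_t^{(\pi'_t,\pi_{-t}),\alpha}(x;\mathcal{S})$ over $\pi'_t\in\Pi_t$. *)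

(* Defs.v *)
From HB Require Import structures.
From mathcomp Require Import all_boot all_order all_algebra.
From mathcomp Require Import all_classical all_reals all_analysis.
Set Implicit Arguments. Unset Strict Implicit. Unset Printing Implicit Defensive.
Import Order.TTheory GRing.Theory Num.Theory.
Local Open Scope ring_scope.

Definition prob_vec (R : realType) (E : finType) (p : {ffun E -> R}) : Prop :=
  (forall e, 0 <= p e) /\ \sum_(e : E) p e = 1.

Definition is_policy (R : realType) (X U : finType) (T : nat)
  (pi : nat -> X -> {ffun U -> R}) : Prop :=
  forall t, (t < T)%N -> forall x, prob_vec (pi t x).

(* Q-function by backward recursion; n = number of remaining steps after t *)
Fixpoint Qrec (R : realType) (X U : finType)
  (f : nat -> X -> U -> {ffun X -> R} -> {ffun X -> R})
  (r : nat -> X -> U -> {ffun X -> R} -> R)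
  (pi : nat -> X -> {ffun U -> R}) (mu : nat -> {ffun X -> R})
  (n t : nat) (x : X) (u : U) : R :=
  match n with
  | 0 => r t x u (mu t)
  | n'.+1 => r t x u (mu t) +
      \sum_(x' : X) f t x u (mu t) x' *
        (\sum_(u' : U) pi t.+1 x' u' * Qrec f r pi mu n' t.+1 x' u')
  end.

Definition Qfun (R : realType) (X U : finType) (T : nat)
  (f : nat -> X -> U -> {ffun X -> R} -> {ffun X -> R})
  (r : nat -> X -> U -> {ffun X -> R} -> R)
  (pi : nat -> X -> {ffun U -> R}) (mu : nat -> {ffun X -> R})
  (t : nat) (x : X) (u : U) : R :=
  Qrec f r pi mu (T.-1 - t) t x u.

Definition Vfun (R : realType) (X U : finType) (T : nat)
  (f : nat -> X -> U -> {ffun X -> R} -> {ffun X -> R})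
  (r : nat -> X -> U -> {ffun X -> R} -> R)
  (pi : nat -> X -> {ffun U -> R}) (mu : nat -> {ffun X -> R})
  (t : nat) (x : X) : R :=
  \sum_(u : U) pi t x u * Qfun T f r pi mu t x u.

Definition replace_at (R : realType) (X U : finType)
  (pi : nat -> X -> {ffun U -> R}) (t : nat) (pi' : X -> {ffun U -> R}) :
  nat -> X -> {ffun U -> R} :=
  fun s => if s == t then pi' else pi s.

Definition rqe_cost (R : realType) (X U : finType) (T K : nat)
  (f : nat -> X -> U -> {ffun X -> R} -> {ffun X -> R})
  (r : nat -> X -> U -> {ffun X -> R} -> R)
  (w : 'I_K -> R) (tau alpha : R) (nu : {ffun U -> R} -> R)
  (pi : nat -> X -> {ffun U -> R}) (S : 'I_K -> nat -> {ffun X -> R})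
  (t : nat) (x : X) : R :=
  tau^-1 * ln (\sum_(k < K) w k *
      expR (- (tau * \sum_(u : U) pi t x u * Qfun T f r pi (S k) t x u)))
  + alpha * nu (pi t x).

Definition RQE_opt (R : realType) (X U : finType) (T K : nat)
  (f : nat -> X -> U -> {ffun X -> R} -> {ffun X -> R})
  (r : nat -> X -> U -> {ffun X -> R} -> R)
  (w : 'I_K -> R) (tau alpha : R) (nu : {ffun U -> R} -> R)
  (S : 'I_K -> nat -> {ffun X -> R}) (pi : nat -> X -> {ffun U -> R}) : Prop :=
  is_policy T pi /\
  forall t, (t < T)%N -> forall x (pi' : X -> {ffun U -> R}),
    (forall y, prob_vec (pi' y)) ->
    rqe_cost T f r w tau alpha nu pi S t x
      <= rqe_cost T f r w tau alpha nu (replace_at pi t pi') S t x.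

Definition strictly_convex_on_simplex (R : realType) (U : finType)
  (nu : {ffun U -> R} -> R) : Prop :=
  forall p q : {ffun U -> R}, prob_vec p -> prob_vec q -> p <> q ->
  forall l : R, 0 < l -> l < 1 ->
    nu [ffun u => l * p u + (1 - l) * q u] < l * nu p + (1 - l) * nu q.

(* Main.v *)
Require Import Defs.
From HB Require Import structures.
From mathcomp Require Import all_boot all_order all_algebra.
From mathcomp Require Import all_classical all_reals all_analysis.
From mathcomp Require Import zify ring lra.
Import Order.TTheory GRing.Theory Num.Theory.
Local Open Scope ring_scope.

Lemma Qrec_ext (R : realType) (X U : finType)
  (f : nat -> X -> U -> {ffun X -> R} -> {ffun X -> R})
  (r : nat -> X -> U -> {ffun X -> R} -> R)
  (pi1 pi2 : nat -> X -> {ffun U -> R}) (mu : nat -> {ffun X -> R}) n t x u :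
  (forall s, (t < s)%N -> pi1 s = pi2 s) ->
  Qrec f r pi1 mu n t x u = Qrec f r pi2 mu n t x u.
Proof.
elim: n t x u => [|n IH] t x u H //=.
congr (_ + _); apply: eq_bigr => x' _; congr (_ * _); apply: eq_bigr => u' _.
rewrite H // (IH _ _ _) // => s Hs; apply: H; exact: ltn_trans Hs.
Qed.

Lemma CS (R : realType) (I : finType) (w a b : I -> R) :
  (forall i, 0 <= w i) -> 0 < \sum_i w i * a i ^+ 2 ->
  (\sum_i w i * (a i * b i)) ^+ 2 <=
  (\sum_i w i * a i ^+ 2) * (\sum_i w i * b i ^+ 2).
Proof.
move=> w0.
set A := \sum_i w i * a i ^+ 2; set B := \sum_i w i * b i ^+ 2;
set C := \sum_i w i * (a i * b i) => A0.
set s := - C / A.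
have H0 : 0 <= \sum_i w i * (a i * s + b i) ^+ 2.
  by apply: sumr_ge0 => i _; apply: mulr_ge0 => //; apply: sqr_ge0.
have E : \sum_i w i * (a i * s + b i) ^+ 2 = s ^+ 2 * A + 2 * s * C + B.
  rewrite /A /B /C !mulr_sumr -!big_split /=; apply: eq_bigr => i _; ring.
have E2 : s ^+ 2 * A + 2 * s * C + B = B - C ^+ 2 / A.
  rewrite /s; field; exact: lt0r_neq0.
rewrite E E2 subr_ge0 in H0.
by rewrite mulrC -ler_pdivrMr.
Qed.

Lemma Epos (R : realType) (K : nat) (w : 'I_K -> R) (c : 'I_K -> R) :
  (forall k, 0 <= w k) -> \sum_(k < K) w k = 1 ->
  0 < \sum_(k < K) w k * expR (c k).
Proof.
move=> w0 w1.
have ge0 : 0 <= \sum_(k < K) w k * expR (c k).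
  by apply: sumr_ge0 => k _; apply: mulr_ge0 => //; apply: ltW; apply: expR_gt0.
rewrite lt_def ge0 andbT; apply/eqP => /psumr_eq0P H.
have Hw : forall k, w k = 0.
  move=> k; have /eqP := H (fun k' _ => mulr_ge0 (w0 k') (ltW (expR_gt0 (c k')))) k isT.
  by rewrite mulf_eq0 (gt_eqF (expR_gt0 _)) orbF => /eqP.
move: w1; rewrite big1 // => /eqP; by rewrite eq_sym oner_eq0.
Qed.

Theorem lemma1 (R : realType) (X U : finType) (T K : nat)
  (f : nat -> X -> U -> {ffun X -> R} -> {ffun X -> R})
  (r : nat -> X -> U -> {ffun X -> R} -> R)
  (mu0 : 'I_K -> {ffun X -> R}) (w : 'I_K -> R)
  (tau alpha : R) (nu : {ffun U -> R} -> R)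
  (Sf : 'I_K -> nat -> {ffun X -> R})
  (pia pib : nat -> X -> {ffun U -> R}) (t : nat) :
  (0 < #|X|)%N -> (0 < #|U|)%N -> (1 <= T)%N ->
  (forall s x u m, prob_vec m -> prob_vec (f s x u m)) ->
  (exists M : R, forall s x u m, `|r s x u m| <= M) ->
  (forall k, prob_vec (mu0 k)) -> injective mu0 ->
  (forall k, 0 <= w k) -> \sum_(k < K) w k = 1 ->
  0 < tau -> 0 < alpha -> strictly_convex_on_simplex nu ->
  (forall k s, (s <= T)%N -> prob_vec (Sf k s)) ->
  (forall k, Sf k 0%N = mu0 k) ->
  RQE_opt T f r w tau alpha nu Sf pia ->
  RQE_opt T f r w tau alpha nu Sf pib ->
  (t < T)%N ->
  (forall x u k, Qfun T f r pia (Sf k) t x u = Qfun T f r pib (Sf k) t x u) ->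
  (forall x, pia t x = pib t x) /\
  ((1 <= t)%N -> forall x u k,
     Qfun T f r pia (Sf k) t.-1 x u = Qfun T f r pib (Sf k) t.-1 x u).
Proof.
move=> _ _ T1 _ _ _ _ w0 w1 tau0 alpha0 snu _ _ [Pa Oa] [Pb Ob] Ht HQ.
have H1 : forall x, pia t x = pib t x.
  move=> x.
  have pp := Pa t Ht x; have pq := Pb t Ht x.
  set p := pia t x; set q := pib t x.
  case: (eqVneq p q) => // Hne; exfalso.
  set m : {ffun U -> R} := [ffun u => 2^-1 * p u + (1 - 2^-1) * q u].
  have pm : prob_vec m.
    case: pp => pp0 pp1; case: pq => pq0 pq1; split.
      move=> e; rewrite ffunE; apply: addr_ge0; apply: mulr_ge0 => //; lra.
    under eq_bigr do rewrite ffunE.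
    by rewrite big_split /= -!mulr_sumr pp1 pq1; lra.
  pose Qk k u := Qfun T f r pia (Sf k) t x u.
  pose P (v : {ffun U -> R}) k := tau * \sum_u v u * Qk k u.
  pose E (v : {ffun U -> R}) := \sum_(k < K) w k * expR (- P v k).
  pose g v := tau^-1 * ln (E v) + alpha * nu v.
  have ga : rqe_cost T f r w tau alpha nu pia Sf t x = g p by [].
  have gb : rqe_cost T f r w tau alpha nu pib Sf t x = g q.
    rewrite /rqe_cost /g /E /P /Qk; congr (_ * ln _ + _).
    apply: eq_bigr => k _; congr (_ * expR (- (_ * _))).
    by apply: eq_bigr => u _; rewrite HQ.
  have gma : rqe_cost T f r w tau alpha nu (replace_at pia t (fun _ => m)) Sf t x
     = g m.
    rewrite /rqe_cost /g /E /P /Qk /replace_at eqxx; congr (_ * ln _ + _).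
    apply: eq_bigr => k _; congr (_ * expR (- (_ * _))).
    apply: eq_bigr => u _; congr (_ * _); apply: Qrec_ext => s Hs.
    by rewrite gtn_eqF.
  have gmb : rqe_cost T f r w tau alpha nu (replace_at pib t (fun _ => m)) Sf t x
     = g m.
    rewrite /rqe_cost /g /E /P /Qk /replace_at eqxx; congr (_ * ln _ + _).
    apply: eq_bigr => k _; congr (_ * expR (- (_ * _))).
    apply: eq_bigr => u _; congr (_ * _); rewrite HQ; apply: Qrec_ext => s Hs.
    by rewrite gtn_eqF.
  have Ha := Oa t Ht x (fun _ => m) (fun _ => pm).
  have Hb := Ob t Ht x (fun _ => m) (fun _ => pm).
  rewrite ga gma in Ha; rewrite gb gmb in Hb.
  have Hnu := snu p q pp pq (fun e => (negP Hne) (introT eqP e)) (2^-1) ltac:(lra) ltac:(lra).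
  pose a k := expR (- P p k / 2); pose b k := expR (- P q k / 2).
  have Ep : E p = \sum_k w k * a k ^+ 2.
    apply: eq_bigr => k _; rewrite /a expr2 -expRD; congr (_ * expR _); lra.
  have Eq : E q = \sum_k w k * b k ^+ 2.
    apply: eq_bigr => k _; rewrite /b expr2 -expRD; congr (_ * expR _); lra.
  have Em : E m = \sum_k w k * (a k * b k).
    apply: eq_bigr => k _; rewrite /a /b -expRD; congr (_ * expR _).
    rewrite /P; under eq_bigr do rewrite ffunE mulrDl -!mulrA.
    rewrite big_split /= -!mulr_sumr; lra.
  have Epp : 0 < E p := @Epos _ _ _ _ w0 w1.
  have Eqp : 0 < E q := @Epos _ _ _ _ w0 w1.
  have Emp : 0 < E m := @Epos _ _ _ _ w0 w1.
  have key : E m * E m <= E p * E q.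
    rewrite Ep Eq Em -expr2; apply: CS => //; rewrite -Ep //.
  have lkey : ln (E m) + ln (E m) <= ln (E p) + ln (E q).
    rewrite -!lnM ?posrE // ler_ln ?posrE //; exact: mulr_gt0.
  have ti : 0 < tau^-1 by rewrite invr_gt0.
  have L1 := ler_wpM2l (ltW ti) lkey.
  have L3 : alpha * nu m < 2^-1 * (alpha * nu p) + 2^-1 * (alpha * nu q).
    have -> : 2^-1 * (alpha * nu p) + 2^-1 * (alpha * nu q) =
      alpha * (2^-1 * nu p + (1 - 2^-1) * nu q) by field.
    by rewrite ltr_pM2l.
  rewrite !mulrDr in L1; move: Ha Hb L1 L3; rewrite /g.
  move: (tau^-1 * ln (E p)) (tau^-1 * ln (E q)) (tau^-1 * ln (E m))
    (alpha * nu p) (alpha * nu q) (alpha * nu m) => A1 A2 A3 A4 A5 A6.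
  lra.
split => // t1 x u k.
case: t Ht HQ H1 t1 => // t' Ht HQ H1 _ /=.
rewrite /Qfun.
have -> : (T.-1 - t' = (T.-1 - t'.+1).+1)%N by lia.
rewrite /=; congr (_ + _); apply: eq_bigr => x' _; congr (_ * _).
apply: eq_bigr => u' _; rewrite H1; congr (_ * _); exact: HQ.
Qed.
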